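(* For every $t\ge0$, every $n\ge1$ and every $\mathfrak{t}_n\in\mathbb{T}(n)$, $p_n(\mathfrak{t}_n)=\mathsf{P}_t[\tau_n=\mathfrak{t}_n]$.
   Context: McKean trees: $\mathbb{T}(1)=\{\mathfrak{t}_1\}$ (a single leaf) and for $n\ge2$, $\mathbb{T}(n)=\bigcup_{k=1}^{n-1}\mathbb{T}(k)\times\mathbb{T}(n-k)$; a tree $\mathfrak{t}_n=(\mathfrak{t}^l_n,\mathfrak{t}^r_n)$ has left subtree with $n_l$ leaves and right subtree with $n_r=n-n_l$ leaves, leaves numbered left to right. The germination $\mathfrak{t}_{n,k}\in\mathbb{T}(n+1)$, $k=1,\dots,n$, is obtained by replacing the $k$-th leaf of $\mathfrak{t}_n$ by the two-leaved tree $\mathfrak{t}_2=(\mathfrak{t}_1,\mathfrak{t}_1)$. Weights: $p_1(\mathfrak{t}_1)=1$ and $p_n(\mathfrak{t}_n)=\frac{1}{n-1}p_{n_l}(\mathfrak{t}^l_n)p_{n_r}(\mathfrak{t}^r_n)$ for $n\ge2$. $(\tau_n)_{n\ge1}$ is a random sequence, defined on a probability space with probability $\mathsf{P}_t$, with $\tau_n\in\mathbb{T}(n)$, which is Markov with $\mathsf{P}_t[\tau_1=\mathfrak{t}_1]=1$, $\mathsf{P}_t[\tau_{n+1}=\mathfrak{t}_{n,k}\mid\tau_n=\mathfrak{t}_n]=1/n$ for $k=1,\dots,n$, and $\mathsf{P}_t[\tau_{n+1}=\mathfrak{s}\mid\tau_n=\mathfrak{t}_n]=0$ if $\mathfrak{s}$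 is not a germination of $\mathfrak{t}_n$. *)

(* Defs.v *)
From HB Require Import structures.
From mathcomp Require Import all_boot all_order all_algebra.
From mathcomp Require Import all_classical all_reals.
From mathcomp Require Import ereal measure probability.
Set Implicit Arguments. Unset Strict Implicit. Unset Printing Implicit Defensive.
Import Order.TTheory GRing.Theory Num.Theory.

Inductive tree : Type := Leaf : tree | Node : tree -> tree -> tree.

(* number of leaves; T(n) = [set t | leaves t = n] *)
Fixpoint leaves (t : tree) : nat :=
  match t with Leaf => 1 | Node l r => leaves l + leaves r end.

(* germination t_{n,k}: replace the k-th leaf (leaves numbered 1,2,... from
   left to right) by the two-leaved tree (Leaf, Leaf). *)
Fixpoint germ (t : tree) (k : nat) : tree :=
  match t with
  | Leaf => if k == 1 then Node Leaf Leaf else Leaf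
  | Node l r => if k <= leaves l then Node (germ l k) r
                else Node l (germ r (k - leaves l))
  end.

Fixpoint pw {R : realType} (t : tree) : R :=
  match t with
  | Leaf => 1
  | Node l r => (((leaves l + leaves r)%N - 1)%:R)^-1 * (pw l * pw r)
  end.

Local Open Scope classical_set_scope.
Local Open Scope ereal_scope.

Definition history {Omega : Type} (tau : nat -> Omega -> tree) (n : nat)
  (h : nat -> tree) : set Omega :=
  [set w | forall i, (1 <= i <= n)%N -> tau i w = h i].

(* Main.v *)
Require Import Defs.
From HB Require Import structures.
From mathcomp Require Import all_boot all_order all_algebra.
From mathcomp Require Import all_classical all_reals.
From mathcomp Require Import ereal measure probability.
From mathcomp Require Import ring lra zify.
From Stdlib Require Import Lia.
Import Order.TTheory GRing.Theory Num.Theory.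

Fixpoint tree_eqb t1 t2 := match t1, t2 with
  | Leaf, Leaf => true
  | Node a b, Node c d => tree_eqb a c && tree_eqb b d
  | _, _ => false end.

Lemma tree_eqP : Equality.axiom tree_eqb.
Proof.
elim=> [|a IHa b IHb] [|c d] /=; try by constructor.
by case: (IHa c) => [->|H]; case: (IHb d) => [->|H']; constructor; congruence.
Qed.
HB.instance Definition _ := hasDecEq.Build tree tree_eqP.

Lemma leaves_gt0 t : (0 < leaves t)%N.
Proof. by elim: t => //= l IHl r _; rewrite addn_gt0 IHl. Qed.

Lemma leaves_germ t k : (1 <= k <= leaves t)%N -> leaves (germ t k) = (leaves t).+1.
Proof.
elim: t k => [|l IHl r IHr] k /=.
  by case/andP=> H1 H2; have -> : k = 1%N by apply/eqP; rewrite eqn_leq H1 H2.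
case/andP=> H1 H2; case: ifP => Hk /=.
  by rewrite IHl ?H1 // addSn.
rewrite IHr ?addnS //; apply/andP; split; lia.
Qed.

Fixpoint deg (s : tree) : seq tree :=
  match s with
  | Leaf => [::]
  | Node l r => (if (l == Leaf) && (r == Leaf) then [:: Leaf] else [::])
      ++ [seq Node l' r | l' <- deg l] ++ [seq Node l r' | r' <- deg r]
  end.

Lemma deg_leaves s u : u \in deg s -> (leaves u).+1 = leaves s.
Proof.
elim: s u => [|l IHl r IHr] u //=.
rewrite !mem_cat => /or3P [|/mapP [l' Hl' ->]|/mapP [r' Hr' ->]] /=.
- by case: ifP => // /andP [/eqP -> /eqP ->]; rewrite inE => /eqP ->.
- by rewrite -(IHl _ Hl').
- by rewrite -(IHr _ Hr') addnS.
Qed.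

Lemma germ_deg u k : (1 <= k <= leaves u)%N -> u \in deg (germ u k).
Proof.
elim: u k => [|l IHl r IHr] k /=.
  by case/andP=> H1 H2; have -> : k = 1%N by apply/eqP; rewrite eqn_leq H1 H2.
case/andP=> H1 H2; case: ifP => Hk /=; rewrite !mem_cat; apply/or3P.
  by apply: Or32; apply: map_f; apply: IHl; rewrite H1.
apply: Or33; apply: map_f; apply: IHr; apply/andP; split; lia.
Qed.

Lemma deg_germ s u : u \in deg s ->
  exists k, (1 <= k <= leaves u)%N /\ s = germ u k.
Proof.
elim: s u => [|l IHl r IHr] u //=.
rewrite !mem_cat => /or3P [|/mapP [l' Hl' ->]|/mapP [r' Hr' ->]] /=.
- case: ifP => // /andP [/eqP -> /eqP ->]; rewrite inE => /eqP ->.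
  by exists 1%N.
- have [k [Hk ->]] := IHl _ Hl'; exists k; split.
    move: Hk (leaves_gt0 r); lia.
  by case/andP: Hk => _ ->.
- have [k [Hk ->]] := IHr _ Hr'; exists (leaves l + k)%N; split.
    move: Hk (leaves_gt0 l); lia.
  have -> : (leaves l + k <= leaves l)%N = false by move: Hk; lia.
  by rewrite addKn.
Qed.

Lemma deg_uniq s : uniq (deg s).
Proof.
elim: s => [|l IHl r IHr] //=.
rewrite !cat_uniq !map_inj_uniq ?IHl ?IHr; last 2 first.
  by move=> a b [].
  by move=> a b [].
have H1 : ~~ has (mem [seq Node l' r | l' <- deg l]) [seq Node l r' | r' <- deg r].
  apply/hasPn => x /mapP [r' Hr' ->]; apply/negP => /mapP [l' Hl' [E _]].
  by move: (deg_leaves _ _ Hl'); rewrite E; lia.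
case: ifP => [/andP[/eqP-> /eqP->]|_] //=.
by rewrite H1 !andbT; apply/negP => /hasP [x _]; rewrite in_nil.
Qed.

Lemma leaves1 t : leaves t = 1%N -> t = Leaf.
Proof. case: t => //= l r; move: (leaves_gt0 l) (leaves_gt0 r); lia. Qed.

Lemma sum_deg (R : realType) s :
  (\sum_(u <- deg s) (pw u : R) = ((leaves s)%:R - 1) * pw s)%R.
Proof.
elim: s => [|l IHl r IHr] /=; first by rewrite big_nil subrr mul0r.
rewrite !big_cat /=.
case: ifP => [/andP[/eqP-> /eqP->]|Hlr] /=.
  by rewrite !big_nil big_seq1 /= !addr0 !mulr1 invr1 mulr1 natrD addrK.
have ha := leaves_gt0 l; have hb := leaves_gt0 r.
have hab : (3 <= leaves l + leaves r)%N.
  case: (ltngtP (leaves l) 1) => Ha; [lia|lia|].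
  case: (ltngtP (leaves r) 1) => Hb; [lia|lia|].
  by move: Hlr; rewrite (leaves1 _ Ha) (leaves1 _ Hb).
set a := leaves l in ha hab *; set b := leaves r in hb hab *.
rewrite big_nil add0r !big_map.
rewrite (eq_big_seq (fun l' => ((a + b - 2)%:R^-1 * pw r) * pw l')%R); last first.
  move=> l' Hl' /=.
  have -> : (leaves l' + b - 1 = a + b - 2)%N by move: (deg_leaves _ _ Hl'); rewrite -/a; lia.
  by rewrite mulrA mulrAC.
rewrite [X in (_ + X)%R](eq_big_seq (fun r' => ((a + b - 2)%:R^-1 * pw l) * pw r')%R); last first.
  move=> r' Hr' /=; rewrite -/a.
  have -> : (a + leaves r' - 1 = a + b - 2)%N by move: (deg_leaves _ _ Hr'); rewrite -/b; lia.
  by rewrite mulrA.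
rewrite -!mulr_sumr IHl IHr.
have Hm : ((a + b - 2)%:R = a%:R + b%:R - 2 :> R)%R by rewrite natrB ?natrD //; lia.
have Hn : ((a + b - 1)%:R = a%:R + b%:R - 1 :> R)%R by rewrite natrB ?natrD //; lia.
rewrite natrD Hm Hn.
have ha' : (1 <= a%:R :> R)%R by rewrite ler1n.
have hb' : (1 <= b%:R :> R)%R by rewrite ler1n.
have hab' : (3 <= a%:R + b%:R :> R)%R by rewrite -natrD ler_nat.
field; apply/andP; split; apply/eqP; lra.
Qed.

Fixpoint allT (m : nat) : seq tree :=
  match m with
  | 0 => [::]
  | m'.+1 => Leaf :: [seq Node x y | x <- allT m', y <- allT m']
  end.

Lemma allT_complete m t : (leaves t <= m)%N -> t \in allT m.
Proof.
elim: m t => [|m IH] [|l r] /=; rewrite ?inE //.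
- by move: (leaves_gt0 l) (leaves_gt0 r); lia.
- move=> H; apply: allpairs_f; apply: IH; move: (leaves_gt0 l) (leaves_gt0 r) H; lia.
Qed.

Local Open Scope classical_set_scope.
Local Open Scope ereal_scope.

Lemma meas_in (d : measure_display) (Omega : measurableType d) (X : Omega -> tree) :
  (forall s, measurable [set w | X w = s]) ->
  forall L : seq tree, measurable [set w | X w \in L].
Proof.
move=> HX; elim=> [|u L IH].
  by rewrite (_ : [set w | _] = set0) //; apply/seteqP; split => w //=.
rewrite (_ : [set w | _] = [set w | X w = u] `|` [set w | X w \in L]).
  exact: measurableU.
apply/seteqP; split => w /=; rewrite inE.
  by case/orP => [/eqP ->|]; [left|right].
by case=> [->|->]; rewrite ?eqxx ?orbT.
Qed.

Lemma sum_part (R : realType) (d : measure_display) (Omega : measurableType d)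
  (mu : probability Omega R) (X : Omega -> tree) (E : set Omega) :
  measurable E -> (forall s, measurable [set w | X w = s]) ->
  forall L, uniq L -> mu (E `&` [set w | X w \in L]) =
    \sum_(u <- L) mu (E `&` [set w | X w = u]).
Proof.
move=> mE HX; elim=> [|u L IH] /=.
  rewrite big_nil (_ : _ `&` _ = set0) ?measure0 //.
  by apply/seteqP; split => w //= [].
case/andP=> uL uL'; rewrite big_cons -IH //.
rewrite (_ : _ `&` _ = (E `&` [set w | X w = u]) `|` (E `&` [set w | X w \in L])).
  rewrite measureU //.
  - exact: measurableI.
  - exact: measurableI mE (meas_in _ _ _ HX L).
  - apply/seteqP; split => w //= [[_ ->] [_ H]]; by rewrite H in uL.
apply/seteqP; split => w /=; rewrite inE.
  by move=> [Ew /orP [/eqP ->|H]]; [left|right].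
by move=> [[Ew ->]|[Ew H]]; split; rewrite ?eqxx ?H ?orbT.
Qed.

Theorem lemma3 (R : realType) (d : measure_display) (Omega : measurableType d)
  (P : R -> probability Omega R) (tau : nat -> Omega -> tree) :
  (* tau_n takes values in T(n) *)
  (forall n w, (1 <= n)%N -> leaves (tau n w) = n) ->
  (* the events {tau_n = s} are measurable *)
  (forall n s, measurable [set w | tau n w = s]) ->
  (forall t : R, (0 <= t)%R ->
     (* P_t[tau_1 = t_1] = 1 *)
     P t [set w | tau 1%N w = Leaf] = 1 /\
     (* P_t[tau_{n+1} = t_{n,k} | tau_n = t_n] = 1/n, k = 1..n *)
     (forall n tn k, (1 <= n)%N -> leaves tn = n -> (1 <= k <= n)%N ->
        P t ([set w | tau n.+1 w = germ tn k] `&` [set w | tau n w = tn])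
        = ((n%:R)^-1)%:E * P t [set w | tau n w = tn]) /\
     (* P_t[tau_{n+1} = s | tau_n = t_n] = 0 if s is not a germination of t_n *)
     (forall n tn s, (1 <= n)%N -> leaves tn = n ->
        (forall k, (1 <= k <= n)%N -> s <> germ tn k) ->
        P t ([set w | tau n.+1 w = s] `&` [set w | tau n w = tn]) = 0) /\
     (* Markov property: P_t[tau_{n+1} = s | tau_1 = h_1, ..., tau_n = h_n]
        = P_t[tau_{n+1} = s | tau_n = h_n] (in product form) *)
     (forall n (h : nat -> tree) s, (1 <= n)%N ->
        P t ([set w | tau n.+1 w = s] `&` history tau n h)
          * P t [set w | tau n w = h n]
        = P t ([set w | tau n.+1 w = s] `&` [set w | tau n w = h n])
          * P t (history tau n h))) ->
  forall t : R, (0 <= t)%R ->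
  forall (n : nat) (tn : tree), (1 <= n)%N -> leaves tn = n ->
    P t [set w | tau n w = tn] = (pw tn : R)%:E.
Proof.
move=> Hleaves Hmeas Hyp t t0.
have [H1 [H2 [H3 _]]] := Hyp t t0.
elim=> [//|n IH] s _ Hs.
case: n IH Hs => [|n] IH Hs.
  by rewrite (leaves1 _ Hs) H1.
have {}IH := fun tn => IH tn isT.
set L := undup (allT n.+1).
have HE : [set w | tau n.+2 w = s] =
    [set w | tau n.+2 w = s] `&` [set w | tau n.+1 w \in L].
  apply/seteqP; split => w /=; last by case.
  move=> ->; split => //; rewrite mem_undup; apply: allT_complete.
  by rewrite Hleaves.
rewrite HE sum_part ?undup_uniq //.
rewrite (eq_big_seq (fun u => if u \in deg s then ((n.+1%:R)^-1 * pw u)%:E else 0)); last first.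
  move=> u _; case: (leaves u =P n.+1) => Hu.
    case Hd: (u \in deg s).
      have [k [Hk Hsk]] := deg_germ _ _ Hd.
      by rewrite Hsk (H2 n.+1 u k) ?IH ?EFinM // -Hu.
    apply: H3 => // k Hk Hsk.
    by move: Hd; rewrite Hsk germ_deg ?Hu.
  rewrite (_ : _ `&` _ = set0) ?measure0; last first.
    by apply/seteqP; split => w //= [_ Hw]; apply: Hu; rewrite -Hw Hleaves.
  case: ifP => // Hd; exfalso; apply: Hu.
  by move: (deg_leaves _ _ Hd); rewrite Hs => -[].
rewrite -big_mkcond -big_filter.
rewrite (perm_big (deg s)); last first.
  apply: uniq_perm; first by rewrite filter_uniq // undup_uniq.
    exact: deg_uniq.
  move=> u; rewrite mem_filter mem_undup; case Hd: (u \in deg s) => //.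
  apply: allT_complete; move: (deg_leaves _ _ Hd); rewrite Hs => -[->].
  by [].
rewrite sumEFin -mulr_sumr sum_deg Hs; congr (_%:E).
rewrite mulrA (_ : (n.+2%:R - 1 = n.+1%:R :> R)%R); last by rewrite -(natr1 n.+1) addrK.
by rewrite mulVf ?mul1r // pnatr_eq0.
Qed.
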